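(* Let $p$ be an odd prime, and let $L$ be a Lie sublattice of a saturable $\mathbb{Z}_p$-Lie lattice $S$. Then the isolator $\mathrm{iso}_S(L)$ is saturable and $|\mathrm{iso}_S(L):L|<\infty$; in particular, $L$ and $\mathrm{iso}_S(L)$ have the same dimension. Furthermore, if $L$ is a Lie ideal of $S$, then $\mathrm{iso}_S(L)$ is PF-embedded in $S$.
   Context: A $\mathbb{Z}_p$-Lie lattice is a Lie algebra over $\mathbb{Z}_p$ free of finite rank as a module (dimension = rank). The isolator of a Lie sublattice $L$ in $S$ is $\mathrm{iso}_S(L)=S\cap(\mathbb{Q}_p\otimes L)$ (inside $\mathbb{Q}_p\otimes S$). For an ideal $M$ of $S$, a potent filtration of $M$ in $S$ is a descending series $(M_i)_{i\in\mathbb{N}}$ of ideals of $S$ with $M_1=M$, $\bigcap M_i=0$, $[M_i,S]\subseteq M_{i+1}$, $[M_i,S,\ldots,S]\subseteq pM_{i+1}$ ($p-1$ copies of $S$, brackets left-normed); $M$ is PF-embedded if such exists; a Lie lattice is saturable iff it admits a potent filtration of itself. *)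

(* Defs.v *)
From HB Require Import structures.
From mathcomp Require Import all_boot all_order all_algebra.
From mathcomp Require Import boolp.
Set Implicit Arguments.
Unset Strict Implicit.
Unset Printing Implicit Defensive.
Import Order.TTheory GRing.Theory Num.Theory.
Local Open Scope ring_scope.

(* The ring Z_p of p-adic integers, built as the inverse limit of Z/p^n Z:   *)
(* an element is a coherent sequence (x_n)_n of integers with                *)
(* 0 <= x_n < p^n (x_n = x_n mod p^n) and x_{n+1} = x_n mod p^n.             *)
Section Padic.
Variable p : nat.

Definition pw (n : nat) : int := (p ^ n)%N%:Z.

Record zp := ZP {
  zs : nat -> int;
  zs_coh : forall n, (zs n.+1 %% pw n)%Z = zs n;
  zs_red : forall n, (zs n %% pw n)%Z = zs n }.

HB.instance Definition _ := gen_eqMixin zp.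
HB.instance Definition _ := gen_choiceMixin zp.

Lemma zp_inj (x y : zp) : zs x = zs y -> x = y.
Proof.
case: x y => [f cf rf] [g cg rg] /= efg; subst g.
by rewrite (Prop_irrelevance cf cg) (Prop_irrelevance rf rg).
Qed.

Lemma pw_dvd n : (pw n %| pw n.+1)%Z.
Proof. by rewrite /pw /dvdz /= unfold_in /= expnS dvdn_mull. Qed.

Lemma modz_dvdm (d m x : int) : (d %| m)%Z -> (((x %% m)%Z %% d)%Z = (x %% d)%Z).
Proof.
move=> dm; apply/eqP; rewrite eqz_mod_dvd.
have -> : (x %% m)%Z - x = - ((x %/ m)%Z * m).
  by rewrite {2}(divz_eq x m) opprD addrCA subrr addr0.
by rewrite dvdzE abszN -dvdzE dvdz_mull.
Qed.

Lemma zs_cong (x : zp) n : (zs x n.+1 = zs x n %[mod pw n])%Z.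
Proof. by rewrite zs_coh zs_red. Qed.

Section Mk.
Variable g : nat -> int.
Hypothesis gP : forall n, (g n.+1 = g n %[mod pw n])%Z.

Lemma mk_coh n : ((g n.+1 %% pw n.+1)%Z %% pw n)%Z = (g n %% pw n)%Z.
Proof. by rewrite modz_dvdm ?pw_dvd // gP. Qed.

Lemma mk_red n : ((g n %% pw n)%Z %% pw n)%Z = (g n %% pw n)%Z.
Proof. exact: modz_mod. Qed.

Definition zp_mk : zp := @ZP (fun n => (g n %% pw n)%Z) mk_coh mk_red.
End Mk.

Lemma zs_mk g gP n : zs (@zp_mk g gP) n = (g n %% pw n)%Z.
Proof. by []. Qed.

Lemma cst_coh (c : int) n : (c = c %[mod pw n])%Z. Proof. by []. Qed.

Definition zp0 : zp := zp_mk (cst_coh 0).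
Definition zp1 : zp := zp_mk (cst_coh 1).

Lemma add_coh (x y : zp) n :
  (zs x n.+1 + zs y n.+1 = zs x n + zs y n %[mod pw n])%Z.
Proof. by rewrite -modzDm !zs_cong modzDm. Qed.
Definition zp_add (x y : zp) : zp := zp_mk (add_coh x y).

Lemma opp_coh (x : zp) n : (- zs x n.+1 = - zs x n %[mod pw n])%Z.
Proof. by rewrite -modzNm zs_cong modzNm. Qed.
Definition zp_opp (x : zp) : zp := zp_mk (opp_coh x).

Lemma mul_coh (x y : zp) n :
  (zs x n.+1 * zs y n.+1 = zs x n * zs y n %[mod pw n])%Z.
Proof. by rewrite -modzMm !zs_cong modzMm. Qed.
Definition zp_mul (x y : zp) : zp := zp_mk (mul_coh x y).

Lemma zp_addA : associative zp_add.
Proof.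
move=> x y z; apply: zp_inj; apply: funext => n /=.
by rewrite modzDml modzDmr addrA.
Qed.

Lemma zp_addC : commutative zp_add.
Proof. by move=> x y; apply: zp_inj; apply: funext => n /=; rewrite addrC. Qed.

Lemma zp_add0 : left_id zp0 zp_add.
Proof.
by move=> x; apply: zp_inj; apply: funext => n /=; rewrite modzDml add0r zs_red.
Qed.

Lemma zp_addN : left_inverse zp0 zp_opp zp_add.
Proof.
by move=> x; apply: zp_inj; apply: funext => n /=; rewrite modzDml addNr.
Qed.

HB.instance Definition _ := GRing.isZmodule.Build zp zp_addA zp_addC zp_add0 zp_addN.

Lemma zp_mulA : associative zp_mul.
Proof.
move=> x y z; apply: zp_inj; apply: funext => n /=.
by rewrite modzMml modzMmr mulrA.
Qed.

Lemma zp_mulC : commutative zp_mul.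
Proof. by move=> x y; apply: zp_inj; apply: funext => n /=; rewrite mulrC. Qed.

Lemma zp_mul1 : left_id zp1 zp_mul.
Proof.
by move=> x; apply: zp_inj; apply: funext => n /=; rewrite modzMml mul1r zs_red.
Qed.

Lemma zp_mulDl : left_distributive zp_mul zp_add.
Proof.
move=> x y z; apply: zp_inj; apply: funext => n /=.
by rewrite modzMml modzDm mulrDl.
Qed.

HB.instance Definition _ :=
  GRing.Zmodule_isComPzRing.Build zp zp_mulA zp_mulC zp_mul1 zp_mulDl.

End Padic.

Notation "''Z_p[' p ]" := (zp p) (format "''Z_p[' p ]").

(* Z_p-Lie lattices.  A Z_p-Lie lattice of dimension d is (up to isomorphism)*)
(* the free module 'rV['Z_p]_d equipped with a Lie bracket.  Sublattices,    *)
(* ideals, filtrations are subsets (V -> Prop) of an ambient Lie lattice.    *)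
Section Lie.
Variables (p d : nat).
Local Notation V := 'rV['Z_p[p]]_d.

Definition lie_bracket (br : V -> V -> V) : Prop :=
  [/\ forall (a : 'Z_p[p]) x y z, br (a *: x + y) z = a *: br x z + br y z,
      forall (a : 'Z_p[p]) x y z, br z (a *: x + y) = a *: br z x + br z y,
      forall x, br x x = 0
    & forall x y z, br x (br y z) + br y (br z x) + br z (br x y) = 0].

Variable br : V -> V -> V.

Definition submod (A : V -> Prop) : Prop :=
  [/\ A 0, forall x y, A x -> A y -> A (x + y)
    & forall (a : 'Z_p[p]) x, A x -> A (a *: x)].

Definition incl (A B : V -> Prop) : Prop := forall x, A x -> B x.

Definition lie_sublattice (S L : V -> Prop) : Prop :=
  [/\ submod L, incl L S & forall x y, L x -> L y -> L (br x y)].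

Definition lie_ideal (S M : V -> Prop) : Prop :=
  [/\ submod M, incl M S & forall x s, M x -> S s -> M (br x s)].

Definition pmul (M : V -> Prop) : V -> Prop :=
  fun y => exists2 m, M m & y = (p%:R : 'Z_p[p]) *: m.

Fixpoint itbr (x : V) (s : seq V) : V :=
  if s is t :: s' then itbr (br x t) s' else x.

(* The paper's index set is N = {1,2,...}
   with M_1 = M; here F i stands for M_{i+1}.  Since each M_{i+1} (resp.
   p M_{i+1}) is a submodule, the inclusions of the (spans of) brackets
   [M_i,S] and [M_i,S,...,S] are stated on generators. *)
Definition potent_filtration (S M : V -> Prop) (F : nat -> V -> Prop) : Prop :=
  [/\ F 0 = M,
      forall i, lie_ideal S (F i),
      forall i, incl (F i.+1) (F i)
    & forall x, (forall i, F i x) -> x = 0] /\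
  [/\ forall i x s, F i x -> S s -> F i.+1 (br x s)
    & forall i x (s : seq V), F i x -> size s = p.-1 ->
        (forall t, t \in s -> S t) -> pmul (F i.+1) (itbr x s)].

Definition PF_embedded (S M : V -> Prop) : Prop :=
  exists F, potent_filtration S M F.

Definition saturable (L : V -> Prop) : Prop := PF_embedded L L.

(* Isolator iso_S(L) = S \cap (Q_p \otimes L).  Inside Q_p \otimes S an
   element lies in Q_p \otimes L = \bigcup_n p^-n L iff some p^n-multiple of
   it lies in L. *)
Definition isolator (S L : V -> Prop) : V -> Prop :=
  fun x => S x /\ exists n : nat, L (((p%:R : 'Z_p[p]) ^+ n) *: x).

(* |A : B| < oo for B <= A: finitely many cosets of B meet A. *)
Definition finite_index (A B : V -> Prop) : Prop :=
  exists s : seq V, forall x, A x -> exists2 y, y \in s & B (x - y).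

Definition free_of_rank (A : V -> Prop) (r : nat) : Prop :=
  exists b : 'I_r -> V,
    (forall x, A x <-> exists c : 'I_r -> 'Z_p[p], x = \sum_i c i *: b i) /\
    (forall c : 'I_r -> 'Z_p[p], \sum_i c i *: b i = 0 -> forall i, c i = 0).
End Lie.

(* Main.v *)
From HB Require Import structures.
From mathcomp Require Import all_boot all_order all_algebra ring.
From mathcomp Require Import boolp.
Require Import Defs.
Set Implicit Arguments. Unset Strict Implicit. Unset Printing Implicit Defensive.
Import Order.TTheory GRing.Theory Num.Theory.
Local Open Scope ring_scope.
Lemma exists_min (P : nat -> Prop) : (exists n, P n) ->
  exists n, P n /\ forall m, (m < n)%N -> ~ P m.
Proof.
case=> n Pn; elim: n {-2}n (leqnn n) Pn => [|N IH] n le_nN Pn.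
  exists n; split=> // m; rewrite leqn0 in le_nN; by rewrite (eqP le_nN).
case: (pselect (exists m, (m < n)%N /\ P m)) => [[m [lt_mn Pm]]|none].
  by apply: (IH m) => //; rewrite -ltnS (leq_trans lt_mn).
by exists n; split=> // m lt_mn Pm; apply: none; exists m.
Qed.

Section Arith.
Variable p : nat.
Hypothesis pp : prime p.
Local Notation Z := ('Z_p[p]).
Local Notation pw := (pw p).
Local Notation P := (p%:R : Z).

Lemma zsD (x y : Z) n : zs (x + y) n = ((zs x n + zs y n) %% pw n)%Z. Proof. by []. Qed.
Lemma zsM (x y : Z) n : zs (x * y) n = ((zs x n * zs y n) %% pw n)%Z. Proof. by []. Qed.
Lemma zsN (x : Z) n : zs (- x) n = ((- zs x n) %% pw n)%Z. Proof. by []. Qed.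
Lemma zs0 n : zs (0 : Z) n = 0. Proof. by rewrite /= mod0z. Qed.
Lemma zs1 n : zs (1 : Z) n = (1 %% pw n)%Z. Proof. by []. Qed.

Lemma p_gt0 : (0 < p)%N. Proof. exact: prime_gt0. Qed.
Lemma pw_gt0 n : 0 < pw n. Proof. by rewrite /Defs.pw ltz_nat expn_gt0 p_gt0. Qed.
Lemma pw_neq0 n : pw n != 0. Proof. by rewrite gt_eqF ?pw_gt0. Qed.
Lemma pwD m n : pw (m + n) = pw m * pw n. Proof. by rewrite /Defs.pw expnD PoszM. Qed.
Lemma pw_dvdD m k : (pw m %| pw (m + k))%Z. Proof. by rewrite pwD dvdz_mulr. Qed.

Lemma zs_cohle (x : Z) m n : (m <= n)%N -> (zs x n %% pw m)%Z = zs x m.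
Proof.
move=> /subnKC <-; elim: (n - m)%N => [|k IH]; first by rewrite addn0 zs_red.
by rewrite addnS -(modz_dvdm _ (pw_dvdD m k)) zs_coh IH.
Qed.

Lemma zp_eq0 (x : Z) : (forall n, zs x n = 0) -> x = 0.
Proof. by move=> h; apply: zp_inj; apply: funext => n; rewrite h zs0. Qed.

Lemma zs_nat k n : zs (k%:R : Z) n = (k%:Z %% pw n)%Z.
Proof.
elim: k => [|k IH]; first by rewrite zs0 mod0z.
by rewrite mulrS zsD IH zs1 modzDm -addn1 PoszD addrC.
Qed.

Lemma zs_P e n : zs (P ^+ e) n = (pw e %% pw n)%Z.
Proof. by rewrite -natrX zs_nat. Qed.

Lemma zs_dvd (x : Z) e : zs x e = 0 -> exists y, x = P ^+ e * y.
Proof.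
move=> x0.
have dv n : (pw e %| zs x (n + e))%Z.
  by apply/dvdz_mod0P; rewrite zs_cohle ?leq_addl.
pose q n := (zs x (n + e) %/ pw e)%Z.
have qK n : q n * pw e = zs x (n + e) by rewrite divzK.
have qc n : (q n.+1 = q n %[mod pw n])%Z.
  apply/eqP; rewrite eqz_mod_dvd -(dvdz_mul2r (pw_neq0 e)) -pwD mulrBl !qK.
  rewrite -eqz_mod_dvd addSn -(zs_coh x (n + e)) modz_mod //.
exists (zp_mk qc); apply: zp_inj; apply: funext => n.
rewrite zsM zs_P zs_mk modzMm (mulrC (pw e)) qK.
by rewrite zs_cohle ?leq_addr.
Qed.

Lemma zs_unit (x : Z) : zs x 1 != 0 -> exists y, x * y = 1.
Proof.
move=> x1.
have cop n : coprimez (pw n) (zs x n).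
  case: n => [|n]; first by rewrite /Defs.pw expn0 /coprimez gcd1z.
  rewrite coprimezE /= coprime_pexpl // prime_coprime //.
  apply: contra x1 => pd; rewrite -(zs_cohle x (isT : (1 <= n.+1)%N)).
  apply/eqP/dvdz_mod0P; rewrite /Defs.pw expn1 /dvdz //.
have ex n : exists u, (pw n %| u * zs x n - 1)%Z.
  have := cop n; rewrite coprimez_sym => /coprimezP [[u v] /= e].
  exists u; have -> : u * zs x n - 1 = - (v * pw n) by rewrite -e; ring.
  by rewrite rpredN dvdz_mull.
case: (choice ex) => f fP.
have fc n : (f n.+1 = f n %[mod pw n])%Z.
  apply/eqP; rewrite eqz_mod_dvd -(Gauss_dvdzl _ (cop n)).
  have h1 : (pw n %| f n.+1 * zs x n.+1 - 1)%Z.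
    apply: dvdz_trans (fP n.+1); rewrite -(addn1 n); exact: pw_dvdD.
  have h2 : (pw n %| zs x n.+1 - zs x n)%Z.
    by rewrite -eqz_mod_dvd zs_cong.
  have -> : (f n.+1 - f n) * zs x n =
     (f n.+1 * zs x n.+1 - 1) - f n.+1 * (zs x n.+1 - zs x n) - (f n * zs x n - 1).
    ring.
  by apply: rpredB; [apply: rpredB; [exact: h1 | exact: dvdz_mull] | exact: fP].
exists (zp_mk fc); apply: zp_inj; apply: funext => n.
rewrite zsM zs_mk zs1 modzMmr mulrC; apply/eqP; rewrite eqz_mod_dvd; exact: fP.
Qed.

Lemma zs_P0 (x : Z) e : P ^+ e * x = 0 -> x = 0.
Proof.
move=> h; apply: zp_eq0 => n.
have := zs0 (n + e); rewrite -h zsM zs_P modzMml => /dvdz_mod0P.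
rewrite pwD (mulrC (pw n)) dvdz_mul2l ?pw_neq0 // => /dvdz_mod0P.
by rewrite zs_cohle ?leq_addr.
Qed.

Lemma unit_part (a u : Z) e : a = P ^+ e * u -> zs a e.+1 != 0 -> zs u 1 != 0.
Proof.
move=> -> ; apply: contra => /eqP u1; apply/eqP.
rewrite zsM zs_P modzMml; apply/dvdz_mod0P.
have : (pw 1 %| zs u e.+1)%Z by apply/dvdz_mod0P; rewrite zs_cohle.
by rewrite -addn1 pwD => d; rewrite dvdz_mul2l ?pw_neq0.
Qed.

Lemma zs_gen (a y : Z) e : zs a e = 0 -> zs a e.+1 != 0 -> zs y e = 0 ->
  exists c, y = c * a.
Proof.
move=> a0 a1 y0.
case: (zs_dvd a0) => u au; case: (zs_dvd y0) => y' yy.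
have [w uw] := zs_unit (unit_part au a1).
exists (y' * w); rewrite yy au.
have -> : y' * w * (P ^+ e * u) = P ^+ e * y' * (u * w) by ring.
by rewrite uw mulr1.
Qed.

Lemma zs_valuation (x : Z) : x != 0 ->
  exists e, zs x e = 0 /\ zs x e.+1 != 0.
Proof.
move=> x0.
have ex : exists n, zs x n.+1 != 0.
  case: (pselect (exists n, zs x n.+1 != 0)) => // none.
  case/eqP: x0; apply: zp_eq0 => [[|n]]; first by rewrite -(zs_red x 0) modz1.
  by apply/eqP/negbNE/negP => h; apply: none; exists n.
case: (exists_min ex) => e [He Hmin]; exists e; split => //.
case: e He Hmin => [|e] _ Hmin; first by rewrite -(zs_red x 0) modz1.
by apply/eqP/negbNE/negP => h; case: (Hmin e (ltnSn e)).
Qed.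

Lemma zp_domain (x y : Z) : x * y = 0 -> y != 0 -> x = 0.
Proof.
move=> xy y0; case: (zs_valuation y0) => e [ye0 ye1].
case: (zs_dvd ye0) => u yu.
have [w uw] := zs_unit (unit_part yu ye1).
apply: (@zs_P0 _ e).
have -> : P ^+ e * x = x * y * w by rewrite yu; rewrite -[LHS]mulr1 -uw; ring.
by rewrite xy !mul0r.
Qed.

Lemma P_neq0 e : P ^+ e != 0.
Proof.
apply/eqP => h; have := zs_P e e.+1; rewrite h zs0 => /esym.
rewrite modz_small; last first.
  by rewrite ltW ?pw_gt0 //= /Defs.pw ltz_nat ltn_exp2l ?prime_gt1.
by move/eqP; rewrite (negPf (pw_neq0 e)).
Qed.

Lemma zs_residue (c : Z) N : exists c1,
  c = (`|zs c N|%N)%:R + P ^+ N * c1 /\ (`|zs c N| < p ^ N)%N.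
Proof.
have ge0 : 0 <= zs c N by rewrite -zs_red modz_ge0 ?pw_neq0.
have lt : zs c N < pw N by rewrite -zs_red ltz_pmod ?pw_gt0.
have k0 : zs (c - (`|zs c N|%N)%:R) N = 0.
  rewrite zsD zsN modzDmr zs_nat gez0_abs // zs_red subrr mod0z //.
case: (zs_dvd k0) => c1 e; exists c1; split; first by rewrite -e; ring.
by rewrite -ltz_nat gez0_abs.
Qed.

End Arith.
Section Mod.
Variables (p d : nat).
Hypothesis pp : prime p.
Local Notation Z := ('Z_p[p]).
Local Notation V := 'rV[Z]_d.
Local Notation P := (p%:R : Z).

Definition trunc (A : V -> Prop) k : V -> Prop :=
  fun x => A x /\ forall j : 'I_d, (k <= j)%N -> x 0 j = 0.

Lemma sub_add (A : V -> Prop) : submod A -> forall x y, A x -> A y -> A (x + y).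
Proof. by case. Qed.
Lemma sub_scale (A : V -> Prop) : submod A -> forall a x, A x -> A (a *: x).
Proof. by case. Qed.
Lemma sub_0 (A : V -> Prop) : submod A -> A 0.
Proof. by case. Qed.
Lemma sub_opp (A : V -> Prop) : submod A -> forall x, A x -> A (- x).
Proof. by move=> sA x Ax; rewrite -scaleN1r; apply: sub_scale. Qed.
Lemma sub_sub (A : V -> Prop) : submod A -> forall x y, A x -> A y -> A (x - y).
Proof. by move=> sA x y Ax Ay; apply: sub_add => //; apply: sub_opp. Qed.

Lemma sub_sum (A : V -> Prop) r (F : 'I_r -> V) : submod A ->
  (forall i, A (F i)) -> A (\sum_i F i).
Proof.
move=> sA FA; apply: (big_ind A) => //; [exact: sub_0 | exact: sub_add].
Qed.

Lemma trunc_submod (A : V -> Prop) k : submod A -> submod (trunc A k).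
Proof.
move=> sA; split.
- by split; [exact: sub_0 | move=> j _; rewrite mxE].
- move=> x y [Ax hx] [Ay hy]; split; first exact: sub_add.
  by move=> j kj; rewrite mxE hx ?hy ?addr0.
- move=> a x [Ax hx]; split; first exact: sub_scale.
  by move=> j kj; rewrite mxE hx ?mulr0.
Qed.

Lemma free_ext (A B : V -> Prop) r : (forall x, A x <-> B x) ->
  free_of_rank A r -> free_of_rank B r.
Proof.
by move=> AB [b [hb ind]]; exists b; split=> // x; rewrite -AB.
Qed.

Lemma basis_in (A : V -> Prop) r (b : 'I_r -> V) :
  (forall x, A x <-> exists c : 'I_r -> Z, x = \sum_i c i *: b i) ->
  forall j, A (b j).
Proof.
move=> hb j; apply/hb; exists (fun i => (i == j)%:R).
rewrite (bigD1 j) //= eqxx scale1r big1 ?addr0 // => i /negPf ->.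
by rewrite scale0r.
Qed.

Lemma trunc0 (A : V -> Prop) : submod A -> free_of_rank (trunc A 0) 0.
Proof.
move=> sA; exists (fun _ => 0); split; last by move=> c _ [].
move=> x; split.
  case=> _ hx; exists (fun _ => 0); rewrite big_ord0; apply/rowP => j.
  by rewrite hx // mxE.
case=> c ->; rewrite big_ord0; by case: (trunc_submod 0 sA).
Qed.

Lemma widen_unlift r (j : 'I_r) : unlift ord_max (widen_ord (leqnSn r) j) = Some j.
Proof.
have -> : widen_ord (leqnSn r) j = lift ord_max j.
  by apply: val_inj; rewrite /= /bump leqNgt ltn_ord.
by rewrite liftK.
Qed.

Lemma trunc_step (A : V -> Prop) k (kd : (k < d)%N) r : submod A ->
  free_of_rank (trunc A k) r ->
  (exists x, trunc A k.+1 x /\ x 0 (Ordinal kd) != 0) ->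
  free_of_rank (trunc A k.+1) r.+1.
Proof.
move=> sA [b [hb ind]] [x0 [Ax0 nx0]].
set j0 := Ordinal kd.
have ex : exists e, exists a, trunc A k.+1 a /\ zs (a 0 j0) e.+1 != 0.
  have [e [_ h]] := zs_valuation nx0; by exists e, x0.
case: (exists_min ex) => e [[a [Aa ae1]] Hmin].
have ye y : trunc A k.+1 y -> zs (y 0 j0) e = 0.
  move=> Ay; case: e ae1 Hmin => [|e] _ Hmin; first by rewrite -zs_red modz1.
  by apply/eqP/negbNE/negP => h; case: (Hmin e (ltnSn e)); exists y.
have gen y : trunc A k.+1 y -> exists c, y 0 j0 = c * a 0 j0.
  by move=> Ay; apply: (zs_gen pp (ye a Aa) ae1 (ye y Ay)).
have a0 : a 0 j0 != 0 by apply: contraNneq ae1 => ->; rewrite zs0.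
have bk j : trunc A k (b j) by apply: basis_in hb j.
have bk1 j : trunc A k.+1 (b j).
  by case: (bk j) => Ab hj; split => // i ki; apply: hj; apply: ltnW.
pose b' (i : 'I_r.+1) := if unlift ord_max i is Some j then b j else a.
have sumE (c : 'I_r.+1 -> Z) : \sum_i c i *: b' i =
    \sum_(j < r) c (widen_ord (leqnSn r) j) *: b j + c ord_max *: a.
  rewrite big_ord_recr /= /b' unlift_none; congr (_ + _).
  by apply: eq_bigr => j _; rewrite widen_unlift.
have trA := trunc_submod k.+1 sA.
exists b'; split.
  move=> x; split.
    move=> Ax; case: (gen x Ax) => c xc.
    have: trunc A k (x - c *: a).
      split; first by apply: sub_sub => //; [case: Ax | apply: sub_scale; case: Aa].
      move=> j kj; rewrite !mxE; case: (ltngtP k j) => [kj'|jk|kj']; [|by rewrite ltnNge kj in jk|].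
      - by rewrite Ax.2 // Aa.2 // mulr0 subrr.
      - have -> : j = j0 by apply: val_inj; rewrite /= kj'.
        by rewrite xc subrr.
    case/hb => c0 e0.
    exists (fun i => if unlift ord_max i is Some j then c0 j else c).
    rewrite sumE unlift_none.
    under eq_bigr => j _ do rewrite widen_unlift.
    by rewrite -e0 subrK.
  case=> c ->; rewrite sumE; apply: sub_add => //.
    by apply: sub_sum => // j; apply: sub_scale.
  by apply: sub_scale.
move=> c; rewrite sumE => h0.
have cm : c ord_max = 0.
  have := congr1 (fun v : V => v 0 j0) h0; rewrite /= !mxE summxE.
  rewrite big1 ?add0r; last by move=> j _; rewrite mxE (bk j).2 ?mulr0.
  by move/(zp_domain pp)=> -> //.
rewrite cm scale0r addr0 in h0.
have c0 := ind _ h0.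
move=> i; case: (unliftP ord_max i) => [j ->|->] //.
by rewrite -(c0 j); congr c; apply: val_inj; rewrite /= /bump leqNgt ltn_ord.
Qed.

Lemma trunc_same (A : V -> Prop) k (kd : (k < d)%N) :
  (forall x, trunc A k.+1 x -> x 0 (Ordinal kd) = 0) ->
  forall x, trunc A k.+1 x <-> trunc A k x.
Proof.
move=> h x; split.
  move=> Ax; split; first by case: Ax.
  move=> j kj; case: (ltngtP k j) => [kj'|jk|kj']; [|by rewrite ltnNge kj in jk|].
    by apply: Ax.2.
  have -> : j = Ordinal kd by apply: val_inj; rewrite /= kj'.
  exact: h.
by case=> Ax hx; split=> // j kj; apply: hx; apply: ltnW.
Qed.

Lemma truncd (A : V -> Prop) x : trunc A d x <-> A x.
Proof.
split; first by case.
by move=> Ax; split=> // j; rewrite leqNgt ltn_ord.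
Qed.

Lemma free_pair (L I : V -> Prop) : submod L -> submod I -> incl L I ->
  (forall x, I x -> exists n, L (P ^+ n *: x)) ->
  exists r, free_of_rank L r /\ free_of_rank I r.
Proof.
move=> sL sI LI iso.
suff: forall k, (k <= d)%N -> exists r,
    free_of_rank (trunc L k) r /\ free_of_rank (trunc I k) r.
  case/(_ d (leqnn d)) => r [h1 h2]; exists r.
  by split; apply: free_ext (fun x => truncd _ x) _.
elim=> [|k IH] kd1; first by exists 0%N; split; apply: trunc0.
have kd : (k < d)%N by [].
case: (IH (ltnW kd)) => r [hL hI].
case: (pselect (exists x, trunc I k.+1 x /\ x 0 (Ordinal kd) != 0)) => [ex|none].
  exists r.+1; split; last exact: trunc_step.
  apply: trunc_step => //; case: ex => x [[Ix hx] nx].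
  case: (iso x Ix) => n Ln; exists (P ^+ n *: x); split.
    by split=> // j kj; rewrite mxE hx ?mulr0.
  rewrite mxE; apply: contra_neq nx => h.
  by rewrite mulrC in h; apply: (zp_domain pp h (P_neq0 pp n)).
have hI0 : forall x, trunc I k.+1 x -> x 0 (Ordinal kd) = 0.
  by move=> x Ix; apply/eqP/negbNE/negP => nx; apply: none; exists x.
exists r; split.
  apply: free_ext hL => x; rewrite trunc_same //.
  by move=> y [Ly hy]; apply: hI0; split => //; apply: LI.
by apply: free_ext hI => x; rewrite (trunc_same hI0).
Qed.

End Mod.
Section Lie2.
Variables (p d : nat).
Hypothesis pp : prime p.
Local Notation Z := ('Z_p[p]).
Local Notation V := 'rV[Z]_d.
Local Notation P := (p%:R : Z).

Lemma fin_index (L I : V -> Prop) r : submod L -> free_of_rank I r ->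
  (forall x, I x -> exists n, L (P ^+ n *: x)) -> finite_index I L.
Proof.
move=> sL [b [hb _]] iso.
have bI := basis_in hb.
have : forall i, exists n, L (P ^+ n *: b i) by move=> i; apply: iso; apply: bI.
case/choice => n hn.
set N := (\sum_i n i)%N.
have LN i : L (P ^+ N *: b i).
  have le : (n i <= N)%N by rewrite /N (bigD1 i) //= leq_addr.
  rewrite -(subnK le) exprD -scalerA; exact: sub_scale.
exists [seq \sum_i (((f : {ffun 'I_r -> 'I_(p ^ N)}) i : nat)%:R : Z) *: b i | f <- enum {ffun 'I_r -> 'I_(p ^ N)}].
move=> x /hb [c ->].
have : forall i, exists c1, c i = (`|zs (c i) N|%N)%:R + P ^+ N * c1 /\
    (`|zs (c i) N| < p ^ N)%N.
  by move=> i; apply: zs_residue.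
case/choice => c1 hc1.
pose f : {ffun 'I_r -> 'I_(p ^ N)} := [ffun i => Ordinal (hc1 i).2].
exists (\sum_i ((f i : nat)%:R : Z) *: b i).
  by apply/mapP; exists f => //; rewrite mem_enum.
rewrite -sumrB; apply: sub_sum => // i; rewrite ffunE /= -scalerBl.
have -> : c i - (`|zs (c i) N|%N)%:R = P ^+ N * c1 i.
  by rewrite {1}(hc1 i).1; ring.
by rewrite mulrC -scalerA; apply: sub_scale.
Qed.

Variable br : V -> V -> V.
Hypothesis br_lie : lie_bracket br.

Lemma br_addl x y z : br (x + y) z = br x z + br y z.
Proof. by move: br_lie; rewrite /lie_bracket => -[h _ _ _]; rewrite -[x]scale1r h !scale1r. Qed.
Lemma br_0l z : br 0 z = 0.
Proof.
have h := br_addl 0 0 z; rewrite addr0 in h.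
by apply: (addrI (br 0 z)); rewrite addr0 -h.
Qed.
Lemma br_scalel a x z : br (a *: x) z = a *: br x z.
Proof. by move: br_lie; rewrite /lie_bracket => -[h _ _ _]; rewrite -[a *: x]addr0 h br_0l addr0. Qed.
Lemma br_addr x y z : br z (x + y) = br z x + br z y.
Proof. by move: br_lie; rewrite /lie_bracket => -[_ h _ _]; rewrite -[x]scale1r h !scale1r. Qed.
Lemma br_0r z : br z 0 = 0.
Proof.
have h := br_addr 0 0 z; rewrite addr0 in h.
by apply: (addrI (br z 0)); rewrite addr0 -h.
Qed.
Lemma br_scaler a x z : br z (a *: x) = a *: br z x.
Proof. by move: br_lie; rewrite /lie_bracket => -[_ h _ _]; rewrite -[a *: x]addr0 h br_0r addr0. Qed.

Variable L : V -> Prop.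
Local Notation I := (isolator (fun _ => True) L).

Lemma iso_submod : submod L -> submod I.
Proof.
move=> sL; split.
- by split=> //; exists 0%N; rewrite scaler0; exact: sub_0.
- move=> x y [_ [n hx]] [_ [m hy]]; split=> //; exists (n + m)%N.
  rewrite scalerDr; apply: sub_add => //.
    by rewrite exprD mulrC -scalerA; apply: sub_scale.
  by rewrite exprD -scalerA; apply: sub_scale.
- move=> a x [_ [n hx]]; split=> //; exists n.
  by rewrite scalerA mulrC -scalerA; apply: sub_scale.
Qed.

Lemma iso_incl x : L x -> I x.
Proof. by move=> Lx; split=> //; exists 0%N; rewrite expr0 scale1r. Qed.

Lemma iso_div m : I (P *: m) -> I m.
Proof. by case=> _ [n h]; split=> //; exists n.+1; rewrite exprSr -scalerA. Qed.

Lemma iso_br_sub : (forall x y, L x -> L y -> L (br x y)) ->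
  forall x y, I x -> I y -> I (br x y).
Proof.
move=> hL x y [_ [n hx]] [_ [m hy]]; split=> //; exists (n + m)%N.
by rewrite exprD -scalerA -br_scaler -br_scalel; apply: hL.
Qed.

Lemma iso_br_ideal : (forall x s, L x -> L (br x s)) ->
  forall x y, I x -> I (br x y).
Proof.
move=> hL x y [_ [n hx]]; split=> //; exists n.
by rewrite -br_scalel; apply: hL.
Qed.

Lemma iso_itbr (T : V -> Prop) : (forall x y, I x -> T y -> I (br x y)) ->
  forall (s : seq V) x, I x -> (forall t, t \in s -> T t) -> I (itbr br x s).
Proof.
move=> hT; elim=> [//|t s IH] x Ix hs /=.
apply: IH; first by apply: hT => //; apply: hs; rewrite mem_head.
by move=> u us; apply: hs; rewrite in_cons us orbT.
Qed.

Lemma iso_potent (T : V -> Prop) F : submod L -> incl I T ->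
  (forall x y, I x -> T y -> I (br x y)) ->
  potent_filtration br (fun _ => True) (fun _ => True) F ->
  potent_filtration br T I (fun i y => I y /\ F i y).
Proof.
move=> sL IT hT [[F0 Fid Fdec Fint] [Fbr Fp]].
have sI := iso_submod sL.
split; split.
- apply: funext => y; apply: propext; rewrite F0; split; [by case | by []].
- move=> i; case: (Fid i) => sF _ hF; split.
  + split.
    * by split; [exact: sub_0 | exact: sub_0].
    * by move=> x y [Ix Fx] [Iy Fy]; split; apply: sub_add.
    * by move=> a x [Ix Fx]; split; apply: sub_scale.
  + by move=> x [Ix _]; apply: IT.
  + by move=> x s [Ix Fx] Ts; split; [exact: hT | exact: hF].
- by move=> i x [Ix Fx]; split=> //; apply: Fdec.
- by move=> x h; apply: Fint => i; case: (h i).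
- by move=> i x s [Ix Fx] Ts; split; [exact: hT | exact: Fbr].
- move=> i x s [Ix Fx] sz Ts.
  case: (Fp i x s Fx sz (fun _ _ => Logic.I)) => m Fm e.
  exists m => //; split=> //; apply: iso_div; rewrite -e.
  by apply: (iso_itbr hT).
Qed.

End Lie2.

Theorem mainTheorem10 (p d : nat) (p_prime : prime p) (p_odd : odd p)
  (br : 'rV['Z_p[p]]_d -> 'rV['Z_p[p]]_d -> 'rV['Z_p[p]]_d)
  (br_lie : lie_bracket br)
  (S_sat : saturable br (fun _ => True))
  (L : 'rV['Z_p[p]]_d -> Prop)
  (L_sub : lie_sublattice br (fun _ => True) L) :
  let I := isolator (fun _ => True) L in
  [/\ saturable br I,
      finite_index I L,
      exists r, free_of_rank L r /\ free_of_rank I r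
    & lie_ideal br (fun _ => True) L -> PF_embedded br (fun _ => True) I].
Proof.
move=> I.
move: L_sub; rewrite /lie_sublattice => -[sL _ cL].
have iso x : I x -> exists n, L ((p%:R : 'Z_p[p]) ^+ n *: x) by case.
have sI : submod I := iso_submod sL.
have incLI : incl L I := @iso_incl p d L.
case: (free_pair p_prime sL sI incLI iso) => r [fL fI].
move: S_sat; rewrite /saturable /PF_embedded => -[F hF].
split.
- exists (fun i y => I y /\ F i y); apply: iso_potent => //.
  exact: (iso_br_sub br_lie cL).
- exact: (fin_index p_prime sL fI iso).
- by exists r.
- rewrite /lie_ideal => -[_ _ hid].
  exists (fun i y => I y /\ F i y); apply: (iso_potent (T := fun _ => True)) => //.
  move=> x y Ix _; apply: (iso_br_ideal br_lie) => //.
  by move=> z s Lz; apply: hid.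
Qed.
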